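(* Let $k \geq 3$, let $F$ be a $k$-edge graph with $\gamma(F) = 1$, let $G$ be a pure $(m,F)$-special graph (with a fixed representation), let $H$ and $I$ be two distinct $F$-constituents of $G$, and let $x \in V(H)$ and $y \in V(I)$. Then $G$ has a minimum $F$-isolating set $D$ with $x, y \in D$.
   Context: All graphs are finite and simple. For $D \subseteq V(G)$, $N_G[D]$ is the closed neighbourhood of $D$. A set $D \subseteq V(G)$ is an $F$-isolating set of $G$ if $G - N_G[D]$ contains no subgraph isomorphic to $F$; $\iota(G,F)$ is the minimum size of such a set, and a minimum $F$-isolating set is one of this size. $\gamma(F)=1$ means $F$ has a vertex adjacent to all other vertices of $F$. A pure $(m,F)$-special graph is a graph obtained as follows: $m+1 = q(k+2)$ for an integer $q\ge 1$; take a tree $T$ with $q$ vertices $v_1,\dots,v_q$, pairwise disjoint copies $F_1,\dots,F_q$ of $F$ disjoint from $V(T)$, and vertices $w_i\in V(F_i)$; the graph has vertex set $V(T)\cup\bigcup_i V(F_i)$ and edge set $E(T)\cup\bigcup_i (E(F_i)\cup\{v_iw_i\})$. $T$ is the quotient graph, and for each $i$ the subgraph $G_i$ with vertex set $\{v_i\}\cup V(F_i)$ and edge set $E(F_i)\cup\{v_iw_i\}$ is an $F$-constituent, with $F$-connection $v_i$. *)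

(* Defs.v *)
From mathcomp Require Import all_boot.
Set Implicit Arguments. Unset Strict Implicit. Unset Printing Implicit Defensive.

Definition simple_graph (T : finType) (e : rel T) : Prop :=
  symmetric e /\ irreflexive e.

Definition edge_set (T : finType) (e : rel T) : {set {set T}} :=
  [set [set p.1; p.2] | p in [set p : T * T | e p.1 p.2]].

Definition num_edges (T : finType) (e : rel T) : nat := #|edge_set e|.

Definition dom_number_one (T : finType) (e : rel T) : Prop :=
  exists c : T, forall v : T, v != c -> e c v.

Definition is_tree (T : finType) (e : rel T) : Prop :=
  [/\ simple_graph e, (forall x y : T, connect e x y) & num_edges e = #|T|.-1].

Definition closed_nbhd (T : finType) (e : rel T) (D : {set T}) : {set T} :=
  [set x | (x \in D) || [exists y in D, e y x]].

Definition has_F_copy (VF T : finType) (f : rel VF) (e : rel T) (A : {set T}) : Prop :=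
  exists g : VF -> T,
    [/\ injective g, (forall u, g u \in A) & (forall u v, f u v -> e (g u) (g v))].

Definition F_isolating (VF T : finType) (f : rel VF) (e : rel T) (D : {set T}) : Prop :=
  ~ has_F_copy f e (~: closed_nbhd e D).

Definition min_F_isolating (VF T : finType) (f : rel VF) (e : rel T) (D : {set T}) : Prop :=
  F_isolating f e D /\ (forall D' : {set T}, F_isolating f e D' -> #|D| <= #|D'|).

(* Pure (m,F)-special graph built from a tree t on 'I_q (vertices v_i = inl i),
   copies F_i of F (vertex u of F_i is inr (i,u)) and attachment vertices
   w_i = inr (i, w i). *)
Notation special_vertex q VF := ('I_q + ('I_q * VF))%type.

Definition special_rel (q : nat) (VF : finType) (f : rel VF) (t : rel 'I_q)
  (w : 'I_q -> VF) : rel (special_vertex q VF) :=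
  fun a b =>
    match a, b with
    | inl i, inl j => t i j
    | inl i, inr (j, v) => (i == j) && (v == w i)
    | inr (j, v), inl i => (i == j) && (v == w i)
    | inr (i, u), inr (j, v) => (i == j) && f u v
    end.

(* x is a vertex of the i-th F-constituent G_i (vertex set {v_i} u V(F_i)). *)
Definition in_constituent (q : nat) (VF : finType) (i : 'I_q)
  (x : special_vertex q VF) : bool :=
  match x with
  | inl j => j == i
  | inr (j, _) => j == i
  end.

(* Main.v *)
Require Import Defs.
From mathcomp Require Import all_boot.
Set Implicit Arguments. Unset Strict Implicit. Unset Printing Implicit Defensive.

Section Aux.
Variables (VF : finType) (f : rel VF) (q : nat) (t : rel 'I_q) (w : 'I_q -> VF).
Local Notation T := (special_vertex q VF).
Local Notation e := (special_rel f t w).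

Lemma caseA (R : {set T}) (g : VF -> T) c l v0 z1 z2 :
  injective g -> (forall u, g u \in R) -> (forall v, v != c -> e (g c) (g v)) ->
  g c = inr (l, v0) ->
  inr (l, z1) \notin R -> inr (l, z2) \notin R -> (inl l \notin R \/ z1 != z2) -> False.
Proof.
move=> ginj gR gE Hgc H1 H2 H3.
have own : forall v, g v = inl l \/ exists p, g v = inr (l, p).
  move=> v; case: (eqVneq v c) => [->|Hv]; first by right; exists v0.
  have := gE v Hv; rewrite Hgc.
  case: (g v) => [l'|[l' p]] /=.
    by case/andP => /eqP -> _; left.
  by case/andP => /eqP <- _; right; exists p.
pose h v := if g v is inr (_, p) then p else z1.
have hinj : injective h.
  move=> v1 v2; rewrite /h => E; apply: ginj.
  case: (own v1) => [E1|[p1 E1]]; case: (own v2) => [E2|[p2 E2]];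
    rewrite E1 E2 in E *; rewrite ?E //.
  - by move: (gR v2); rewrite E2 -E (negbTE H1).
  - by move: (gR v1); rewrite E1 E (negbTE H1).
have [hinv _ K] := injF_bij hinj.
set v := hinv z2.
have Hv : h v = z2 by rewrite /v K.
case: (own v) => [E|[p E]]; move: Hv; rewrite /h E.
  move=> Ez; case: H3 => [H3|/eqP H3]; last by apply: H3.
  by move: (gR v); rewrite E (negbTE H3).
by move=> Ep; move: (gR v); rewrite E Ep (negbTE H2).
Qed.

Lemma caseB (R : {set T}) (g : VF -> T) c i j :
  simple_graph f -> 3 <= num_edges f ->
  injective g -> (forall u, g u \in R) -> (forall u v, f u v -> e (g u) (g v)) ->
  (forall v, v != c -> e (g c) (g v)) ->
  g c = inl i -> i != j -> (forall l, inl l \in R -> l = i \/ l = j) -> False.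
Proof.
move=> [fsym firr] Hk ginj gR gEd gE Hgc Hij HR.
have S1 : forall v, v != c -> g v = inr (i, w i) \/ g v = inl j.
  move=> v Hv; have := gE v Hv; rewrite Hgc.
  case E: (g v) => [l'|[l' p]] /=.
    move=> _; case: (HR l'); first by rewrite -E.
      move=> El; move: Hv; rewrite -(inj_eq ginj) E Hgc El eqxx //.
    by move=> ->; right.
  by case/andP => /eqP <- /eqP ->; left.
have S2 : forall p1 p2, f p1 p2 -> p1 = c \/ p2 = c.
  move=> p1 p2 Hp.
  case: (eqVneq p1 c) => [|H1]; first by left.
  case: (eqVneq p2 c) => [|H2]; first by right.
  exfalso.
  have Hne : p1 != p2 by apply/eqP => E; move: Hp; rewrite E firr.
  have := gEd _ _ Hp.
  case: (S1 _ H1) => E1; case: (S1 _ H2) => E2; rewrite E1 E2 /=.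
  - by move: Hne; rewrite -(inj_eq ginj) E1 E2 eqxx.
  - by rewrite eq_sym (negbTE Hij).
  - by rewrite eq_sym (negbTE Hij).
  - by move: Hne; rewrite -(inj_eq ginj) E1 E2 eqxx.
have S3 : #|~: [set c]| <= 2.
  rewrite -(card_imset _ ginj).
  apply: (leq_trans (subset_leq_card (_ : _ \subset [set inr (i, w i); inl j]))).
    apply/subsetP => z /imsetP [v]; rewrite !inE => Hv ->.
    by case: (S1 _ Hv) => ->; rewrite eqxx ?orbT.
  by rewrite cards2; case: (_ != _).
have S4 : edge_set f \subset (fun v => [set c; v]) @: ~: [set c].
  apply/subsetP => E /imsetP [p]; rewrite inE => Hp ->.
  case: (S2 _ _ Hp) => Hc.
    apply/imsetP; exists p.2; last by rewrite Hc.
    by rewrite !inE; apply/eqP => E2; move: Hp; rewrite Hc E2 firr.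
  apply/imsetP; exists p.1; last by rewrite Hc setUC.
  by rewrite !inE; apply/eqP => E2; move: Hp; rewrite Hc E2 firr.
have := leq_trans (subset_leq_card S4) (leq_imset_card _ _).
rewrite /num_edges in Hk => H.
by have := leq_trans Hk (leq_trans H S3).
Qed.

End Aux.

Theorem lemma3p5 (k : nat) (VF : finType) (f : rel VF)
  (q : nat) (t : rel 'I_q) (w : 'I_q -> VF) (i j : 'I_q)
  (x y : special_vertex q VF) :
  3 <= k -> simple_graph f -> num_edges f = k -> dom_number_one f ->
  0 < q -> is_tree t -> i != j ->
  in_constituent i x -> in_constituent j y ->
  exists D : {set special_vertex q VF},
    [/\ min_F_isolating f (special_rel f t w) D, x \in D & y \in D].
Proof.
move=> Hk Hf Hnum [c Hc] _ _ Hij Hx Hy.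
set e := special_rel f t w.
pose d (l : 'I_q) := if l == i then x else if l == j then y else inl l.
exists (d @: [set: 'I_q]).
set D := d @: _.
have Hji : j != i by rewrite eq_sym.
have xD : x \in D by apply/imsetP; exists i; rewrite ?inE // /d eqxx.
have yD : y \in D by apply/imsetP; exists j; rewrite ?inE // /d (negbTE Hji) eqxx.
split=> //; split.
- move=> [g [ginj gR gE]].
  set N := closed_nbhd e D in gR.
  have notR : forall z, z \in D -> z \notin ~: N by move=> z Hz; rewrite !inE Hz.
  have adjR : forall z z', z \in D -> e z z' -> z' \notin ~: N.
    move=> z z' Hz Hzz; rewrite !inE negbK; apply/orP; right.
    by apply/existsP; exists z; rewrite Hz.
  have F1 : forall l, l != i -> l != j -> inl l \in D.
    by move=> l H1 H2; apply/imsetP; exists l; rewrite ?inE // /d (negbTE H1) (negbTE H2).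
  have F2 : forall l, inl l \in ~: N -> l = i \/ l = j.
    move=> l Hl; case: (eqVneq l i) => [|H1]; first by left.
    case: (eqVneq l j) => [|H2]; first by right.
    by move: Hl; rewrite (negbTE (notR _ (F1 _ H1 H2))).
  have Hadj : forall v, v != c -> e (g c) (g v) by move=> v Hv; apply: gE; apply: Hc.
  have Hkn : 3 <= num_edges f by rewrite Hnum.
  case Ea: (g c) => [l|[l v0]].
    case: (eqVneq l i) => [El|H1].
      by apply: (caseB Hf Hkn ginj gR gE Hadj _ Hij F2); rewrite Ea El.
    case: (eqVneq l j) => [El|H2].
      apply: (caseB Hf Hkn ginj gR gE Hadj _ Hji); first by rewrite Ea El.
      by move=> l' /F2 [] ->; [right|left].
    by move: (gR c); rewrite Ea (negbTE (notR _ (F1 _ H1 H2))).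
  have side : forall (l : 'I_q) z, z \in D -> in_constituent l z -> g c = inr (l, v0) -> False.
    move=> l0 z Hz; case: z Hz => [l'|[l' u]] Hz /= /eqP El; subst l'.
      move=> Eg; apply: (caseA ginj gR Hadj Eg (z1 := w l0) (z2 := w l0)).
      - by apply: (adjR _ _ Hz); rewrite /e /= !eqxx.
      - by apply: (adjR _ _ Hz); rewrite /e /= !eqxx.
      - by left; apply: notR.
    move=> Eg; case: (eqVneq u c) => [Eu|Hu].
      subst u; case: (eqVneq v0 c) => [Ev|Hv].
        by move: (gR c); rewrite Eg Ev (negbTE (notR _ Hz)).
      have Hin := gR c; rewrite Eg in Hin.
      by move: (adjR _ (inr (l0, v0)) Hz); rewrite Hin /e /= eqxx Hc //; move=> /(_ isT).
    apply: (caseA ginj gR Hadj Eg (z1 := u) (z2 := c)).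
    - by apply: notR.
    - apply: (adjR _ _ Hz); rewrite /e /= eqxx /=.
      by move: Hf => [fsym _]; rewrite fsym Hc // eq_sym.
    - by right.
  case: (eqVneq l i) => [El|H1]; first by subst l; apply: (side i x).
  case: (eqVneq l j) => [El|H2]; first by subst l; apply: (side j y).
  apply: (caseA ginj gR Hadj Ea (z1 := w l) (z2 := w l)).
  - by apply: (adjR (inl l)); [apply: F1|rewrite /e /= !eqxx].
  - by apply: (adjR (inl l)); [apply: F1|rewrite /e /= !eqxx].
  - by left; apply: notR; apply: F1.
- move=> D' HD'.
  apply: (leq_trans (leq_imset_card _ _)).
  pose own (z : special_vertex q VF) := match z with inl l => l | inr (l, _) => l end.
  apply: (leq_trans _ (leq_imset_card own D')).
  apply: subset_leq_card; apply/subsetP => l _ /=.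
  case: (boolP [forall u, inr (l, u) \in ~: closed_nbhd e D']) => H.
    exfalso; apply: HD'; exists (fun u => inr (l, u)); split.
    - by move=> a b [].
    - by move=> u; move/forallP: H.
    - by move=> u v Huv; rewrite /= eqxx.
  move/forallPn: H => [u]; rewrite !inE negbK => /orP [Hu|/existsP [z /andP [Hz Hzu]]].
    by apply/imsetP; exists (inr (l, u)).
  apply/imsetP; exists z => //.
  by move: Hzu; case: z {Hz} => [l'|[l' p]] /=; case/andP => /eqP.
Qed.
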